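(* Let $n\ge0$. For all $x,y\in Q_n$ we have $L_{x,y}=R_{x,y}$ as permutations of $Q_n$.
   Context: Cayley--Dickson loops: $Q_0=\{1,-1\}\subset\mathbb{R}$ with conjugation $x^*=x$. For $n\ge1$, $Q_n=\{(x,0),(x,1)\mid x\in Q_{n-1}\}$ with multiplication $(x,0)(y,0)=(xy,0)$, $(x,0)(y,1)=(yx,1)$, $(x,1)(y,0)=(xy^*,1)$, $(x,1)(y,1)=(-y^*x,0)$ and conjugation $(x,0)^*=(x^*,0)$, $(x,1)^*=(-x,1)$, where $-(x,a)=(-x,a)$. $Q_n$ is a loop with neutral element $1=(1,0,\dots,0)$. Translations $L_x(a)=xa$, $R_x(a)=ax$; $L_{x,y}=L_{yx}^{-1}L_yL_x$ and $R_{x,y}=R_{xy}^{-1}R_yR_x$. *)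

(* Defs.v *)
From mathcomp Require Import all_boot.
Set Implicit Arguments. Unset Strict Implicit. Unset Printing Implicit Defensive.

(* Carrier of Q_n.  Q_0 = {1,-1} is encoded by bool (false = 1, true = -1);
   Q_(n+1) = Q_n x {0,1} with pairs (x, a), a : bool (false = 0, true = 1). *)
Fixpoint Q (n : nat) : finType :=
  match n with
  | 0 => bool
  | n'.+1 => (Q n' * bool)%type
  end.

Fixpoint qone (n : nat) : Q n :=
  match n return Q n with
  | 0 => false
  | n'.+1 => (qone n', false)
  end.

Fixpoint qneg (n : nat) : Q n -> Q n :=
  match n return Q n -> Q n with
  | 0 => fun x => ~~ x
  | n'.+1 => fun x => (qneg x.1, x.2)
  end.

Fixpoint qconj (n : nat) : Q n -> Q n :=
  match n return Q n -> Q n with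
  | 0 => fun x => x
  | n'.+1 => fun x => if x.2 then (qneg x.1, true) else (qconj x.1, false)
  end.

Fixpoint qmul (n : nat) : Q n -> Q n -> Q n :=
  match n return Q n -> Q n -> Q n with
  | 0 => fun x y => addb x y   (* sign multiplication in {1,-1} *)
  | n'.+1 => fun x y =>
      match x.2, y.2 with
      | false, false => (qmul x.1 y.1, false)
      | false, true  => (qmul y.1 x.1, true)
      | true,  false => (qmul x.1 (qconj y.1), true)
      | true,  true  => (qneg (qmul (qconj y.1) x.1), false)
      end
  end.

(* Inverse of a map on a finite type (meaningful for bijections, such as the
   translations of the loop Q_n): finv_fin f c is some b with f b = c,
   or c itself if no such b exists. *)
Definition finv_fin (T : finType) (f : T -> T) (c : T) : T :=
  odflt c [pick b | f b == c].

Definition Lt (n : nat) (x : Q n) : Q n -> Q n := fun a => qmul x a.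
Definition Rt (n : nat) (x : Q n) : Q n -> Q n := fun a => qmul a x.

(* L_{x,y} = L_{yx}^{-1} L_y L_x  and  R_{x,y} = R_{xy}^{-1} R_y R_x *)
Definition Lxy (n : nat) (x y : Q n) : Q n -> Q n :=
  fun a => finv_fin (Lt (qmul y x)) (Lt y (Lt x a)).
Definition Rxy (n : nat) (x y : Q n) : Q n -> Q n :=
  fun a => finv_fin (Rt (qmul x y)) (Rt y (Rt x a)).

(* Main.v *)
Require Import Defs.
From mathcomp Require Import all_boot.
Set Implicit Arguments. Unset Strict Implicit. Unset Printing Implicit Defensive.

Fixpoint qabs (n : nat) : Q n -> Q n :=
  match n return Q n -> Q n with
  | 0 => fun _ => false
  | n'.+1 => fun x => (qabs x.1, x.2)
  end.

Fixpoint qxor (n : nat) : Q n -> Q n -> Q n :=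
  match n return Q n -> Q n -> Q n with
  | 0 => fun _ _ => false
  | n'.+1 => fun x y => (qxor x.1 y.1, x.2 (+) y.2)
  end.

Lemma qxorC n (x y : Q n) : qxor x y = qxor y x.
Proof. elim: n x y => [|n IH] x y //=; by rewrite IH addbC. Qed.

Lemma qxorA n (x y z : Q n) : qxor x (qxor y z) = qxor (qxor x y) z.
Proof. elim: n x y z => [|n IH] x y z //=; by rewrite IH addbA. Qed.

Lemma qnegK n (x : Q n) : qneg (qneg x) = x.
Proof. elim: n x => [|n IH] x /=; [by case: x | by rewrite IH; case: x]. Qed.

Lemma qneg_inj n (x y : Q n) : qneg x = qneg y -> x = y.
Proof. by move=> H; rewrite -(qnegK x) H qnegK. Qed.

Lemma qconjN n (x : Q n) : qconj (qneg x) = qneg (qconj x).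
Proof. elim: n x => [|n IH] //= [x b]; case: b => //=; by rewrite IH. Qed.

Lemma qconjK n (x : Q n) : qconj (qconj x) = x.
Proof. elim: n x => [|n IH] //= [x b]; case: b => /=; by rewrite ?IH ?qnegK. Qed.

Lemma qconj_inj n (x y : Q n) : qconj x = qconj y -> x = y.
Proof. by move=> H; rewrite -(qconjK x) H qconjK. Qed.

Lemma qmulN_both n : forall (x y : Q n),
  qmul (qneg x) y = qneg (qmul x y) /\ qmul x (qneg y) = qneg (qmul x y).
Proof.
elim: n => [|n IH] x y /=.
  by case: x; case: y.
case: x => x1 a; case: y => y1 b /=.
case: a; case: b => /=;
  by rewrite ?(proj1 (IH _ _)) ?(proj2 (IH _ _)) ?qconjN ?(proj1 (IH _ _)) ?(proj2 (IH _ _)).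
Qed.

Lemma qmulNl n (x y : Q n) : qmul (qneg x) y = qneg (qmul x y).
Proof. exact: (proj1 (qmulN_both x y)). Qed.
Lemma qmulNr n (x y : Q n) : qmul x (qneg y) = qneg (qmul x y).
Proof. exact: (proj2 (qmulN_both x y)). Qed.

Lemma qconjM n (x y : Q n) : qconj (qmul x y) = qmul (qconj y) (qconj x).
Proof.
elim: n x y => [|n IH] /=.
  by move=> x y; rewrite addbC.
move=> [x1 a] [y1 b] /=.
case: a; case: b => /=;
  by rewrite ?IH ?qconjN ?qconjK ?qmulNl ?qmulNr ?IH ?qnegK ?qconjK.
Qed.

Lemma qabsN n (x : Q n) : qabs (qneg x) = qabs x.
Proof. elim: n x => [|n IH] //= [x b]; by rewrite IH. Qed.

Lemma qabsC n (x : Q n) : qabs (qconj x) = qabs x.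
Proof. elim: n x => [|n IH] //= [x b]; case: b => /=; by rewrite ?IH ?qabsN. Qed.

Lemma qabsM n (x y : Q n) : qabs (qmul x y) = qxor (qabs x) (qabs y).
Proof.
elim: n x y => [|n IH] //= [x1 a] [y1 b] /=.
case: a; case: b => /=; by rewrite ?qabsN IH ?qabsC // qxorC.
Qed.

Lemma qabs_sign n (x y : Q n) : qabs x = qabs y -> x = y \/ x = qneg y.
Proof.
elim: n x y => [|n IH] /=.
  by case; case; auto.
move=> [x1 a] [y1 b] /=.
case=> /IH [->|->] ->; auto.
Qed.

Lemma qconj_sign n (x : Q n) : qconj x = x \/ qconj x = qneg x.
Proof. apply: qabs_sign; exact: qabsC. Qed.

Lemma qcancel_both n : forall (x a b : Q n),
  (qmul x a = qmul x b -> a = b) /\ (qmul a x = qmul b x -> a = b).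
Proof.
elim: n => [|n IH] x a b /=.
  by split; [case: x; case: a; case: b | case: x; case: a; case: b].
case: x => x1 c; case: a => a1 d; case: b => b1 e /=.
split; case: c; case: d; case: e => //= H; case: H => H; congr pair;
  try apply qneg_inj in H;
  first [ apply (proj1 (IH _ _ _)) in H | apply (proj2 (IH _ _ _)) in H ];
  try apply qconj_inj in H; exact: H.
Qed.

Lemma finv_finE (T : finType) (f : T -> T) b c :
  injective f -> f b = c -> finv_fin f c = b.
Proof.
move=> inj fb; rewrite /finv_fin; case: pickP => [b' /eqP H|H] /=.
  by apply: inj; rewrite H fb.
by move: (H b); rewrite fb eqxx.
Qed.

Lemma linj n (x : Q n) : injective (Lt x).
Proof. move=> a b; exact: (proj1 (qcancel_both x a b)). Qed.
Lemma rinj n (x : Q n) : injective (Rt x).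
Proof. move=> a b; exact: (proj2 (qcancel_both x a b)). Qed.

Theorem mainTheorem4 (n : nat) (x y : Q n) : Lxy x y =1 Rxy x y.
Proof.
move=> a; rewrite /Lxy /Rxy.
have hs : qabs (qmul (qmul a x) y) = qabs (qmul a (qmul x y)).
  by rewrite !qabsM qxorA.
case: (qabs_sign hs) => E; have E' := congr1 (@qconj n) E;
  rewrite ?qconjN !qconjM in E';
  case: (qconj_sign x) E' => ->; case: (qconj_sign y) => ->;
  case: (qconj_sign a) => ->;
  move=> E'; repeat rewrite ?qmulNl ?qmulNr ?qnegK in E'.
all: have E'' := congr1 (@qneg n) E'; rewrite ?qnegK in E''.
all: first [ rewrite (@finv_finE _ _ a) ?(@finv_finE _ (Rt (qmul x y)) a);
             [ | exact: rinj | by rewrite /Rt E | exact: linj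
               | rewrite /Lt; first [ by rewrite E' | by rewrite E'' ] ]
           | rewrite (@finv_finE _ _ (qneg a)) ?(@finv_finE _ (Rt (qmul x y)) (qneg a));
             [ | exact: rinj | by rewrite /Rt qmulNl E | exact: linj
               | rewrite /Lt qmulNr; first [ by rewrite E' | by rewrite E'' ] ] ];
  by [].
Qed.
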